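(* Let $\mathbf{A}\in\mathbb{R}^{m\times n}$ and $\mathbf{c}\in\mathbb{R}^m$ be such that $\|\mathbf{A}^\top\mathbf{c}\|_2^2$ is an integer. If $\mathbf{A}^\top\mathbf{c}\neq\mathbf{0}$, then $$\|\boldsymbol{\Pi}_{\mathbf{A}}\mathbf{c}\|_2^2\ \ge\ \frac{1}{\sigma_{\max}^2(\mathbf{A})}=\frac{1}{\lambda_{\max}(\mathbf{A}^\top\mathbf{A})}.$$
   Context: $\boldsymbol{\Pi}_{\mathbf{A}}=\mathbf{A}(\mathbf{A}^\top\mathbf{A})^{\dagger}\mathbf{A}^\top$ is the orthogonal projection onto the image of $\mathbf{A}$ ($\dagger$ = Moore–Penrose pseudoinverse); $\sigma_{\max}(\mathbf{A})$ is the largest singular value of $\mathbf{A}$ and $\lambda_{\max}$ the largest eigenvalue. *)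

(* Defs.v *)
From HB Require Import structures.
From mathcomp Require Import all_boot all_order all_algebra.
From mathcomp Require Import boolp classical_sets reals.
Set Implicit Arguments. Unset Strict Implicit. Unset Printing Implicit Defensive.
Import Order.TTheory GRing.Theory Num.Theory.
Local Open Scope ring_scope.

Definition sqnorm (R : realType) (m : nat) (v : 'cV[R]_m) : R :=
  \sum_(i < m) v i 0 ^+ 2.

Definition is_pinv (R : realType) (p q : nat) (M : 'M[R]_(p, q)) (X : 'M[R]_(q, p)) :=
  [/\ M *m X *m M = M, X *m M *m X = X, (M *m X)^T = M *m X & (X *m M)^T = X *m M].

Definition pinv (R : realType) (p q : nat) (M : 'M[R]_(p, q)) : 'M[R]_(q, p) :=
  xget 0 [set X | is_pinv M X].

(* orthogonal projection onto the image of A : Pi_A = A (A^T A)^+ A^T *)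
Definition proj_im (R : realType) (m n : nat) (A : 'M[R]_(m, n)) : 'M[R]_m :=
  A *m pinv (A^T *m A) *m A^T.

Definition lambda_max (R : realType) (n : nat) (M : 'M[R]_n) : R :=
  xget 0 [set l | eigenvalue M l /\ forall mu, eigenvalue M mu -> mu <= l].

Definition sigma_max (R : realType) (m n : nat) (A : 'M[R]_(m, n)) : R :=
  Num.sqrt (lambda_max (A^T *m A)).

(* Main.v *)
Require Import Defs.
From HB Require Import structures.
From mathcomp Require Import all_boot all_order all_algebra.
From mathcomp Require Import boolp classical_sets reals.
From mathcomp Require Import complex spectral sesquilinear.
Import Order.TTheory GRing.Theory Num.Theory.
Local Open Scope ring_scope.
Set Implicit Arguments. Unset Strict Implicit. Unset Printing Implicit Defensive.

Lemma sqnormE (R : realType) m (v : 'cV[R]_m) : sqnorm v = (v^T *m v) 0 0.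
Proof. by rewrite /sqnorm mxE; apply: eq_bigr => i _; rewrite !mxE expr2. Qed.

Lemma gram0 (R : realType) p k (W : 'M[R]_(p, k)) : W *m W^T = 0 -> W = 0.
Proof.
move=> H; apply/matrixP => i j; have := congr1 (fun X : 'M_p => X i i) H.
rewrite !mxE => /psumr_eq0P h.
have /(_ j isT) : forall l : 'I_k, true -> W i l * W^T l i = 0.
  by apply: h => l _; rewrite mxE -expr2 sqr_ge0.
by rewrite mxE => /eqP; rewrite mulf_eq0 orbb => /eqP.
Qed.

Lemma gram_unit (R : realType) r q (G : 'M[R]_(r, q)) :
  row_free G -> (G *m G^T) \in unitmx.
Proof.
move=> fG; rewrite -row_free_unit; apply: inj_row_free => v.
rewrite mulmxA => H.
have : (v *m G) *m (v *m G)^T = 0 by rewrite trmx_mul mulmxA H mul0mx.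
by move=> /gram0 /eqP; rewrite mulmx_free_eq0 // => /eqP.
Qed.

Lemma pinv_fact (R : realType) p q r (F : 'M[R]_(p, r)) (G : 'M[R]_(r, q)) :
  (G *m G^T) \in unitmx -> (F^T *m F) \in unitmx ->
  is_pinv (F *m G) (G^T *m invmx (G *m G^T) *m invmx (F^T *m F) *m F^T).
Proof.
move=> uG uF.
set X := G^T *m invmx (G *m G^T) *m invmx (F^T *m F) *m F^T.
have BX : F *m G *m X = F *m invmx (F^T *m F) *m F^T.
  by rewrite /X !mulmxA -(mulmxA F G G^T) -(mulmxA F (G *m G^T)) mulmxV // mulmx1.
have XB : X *m (F *m G) = G^T *m invmx (G *m G^T) *m G.
  by rewrite /X !mulmxA -(mulmxA _ F^T F) -(mulmxA _ (invmx (F^T *m F))) mulVmx // mulmx1.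
split.
- by rewrite BX -!mulmxA (mulmxA F^T) mulKmx.
- by rewrite XB /X -!mulmxA (mulmxA G) mulKmx.
- by rewrite BX !trmx_mul trmxK trmx_inv trmx_mul trmxK mulmxA.
- by rewrite XB !trmx_mul trmxK trmx_inv trmx_mul trmxK mulmxA.
Qed.

Lemma pinv_exists (R : realType) p q (B : 'M[R]_(p, q)) : exists X, is_pinv B X.
Proof.
rewrite -{1}(mulmx_base B); eexists; apply: pinv_fact.
  by apply: gram_unit; exact: row_base_free.
have -> : (col_base B)^T *m col_base B = (col_base B)^T *m (col_base B)^T^T.
  by rewrite trmxK.
apply: gram_unit; rewrite /row_free mxrank_tr.
by have := col_base_full B; rewrite /row_full.
Qed.

Lemma pinvP (R : realType) p q (B : 'M[R]_(p, q)) : is_pinv B (pinv B).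
Proof.
rewrite /pinv; have [X hX] := pinv_exists B.
by have := @xgetI _ 0 [set X | is_pinv B X] X hX.
Qed.

Section Spec.
Variable R : realType.
Local Notation C := (R[i]).
Local Notation f := (real_complex R).

Lemma f_real (x : R) : f x \is Num.real.
Proof.
by rewrite realE -(rmorph0 (real_complex R)) !lecR le_total.
Qed.

Lemma Creal_eq (z : C) : z \is Num.real -> z = f (complex.Re z).
Proof.
by case: z => a b; rewrite realE !lecE /= => /orP[] /andP[/eqP h _]; [rewrite h | rewrite -h].
Qed.

Lemma f_conj (x : R) : (f x)^* = f x.
Proof. exact/conj_Creal/f_real. Qed.


Lemma spec_bound n (M : 'M[R]_n) (lam : R) :
  M^T = M -> (forall r, eigenvalue M r -> 0 <= r <= lam) ->
  forall y : 'cV[R]_n, ((M *m y)^T *m (M *m y)) 0 0 <= lam * (y^T *m M *m y) 0 0.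
Proof.
move=> sM hev y.
pose Mc := map_mx f M.
have Mch : (Mc ^t* = Mc)%sesqui.
  by apply/matrixP => i j; rewrite !mxE f_conj; have := congr1 (fun X : 'M_n => X j i) sM; rewrite mxE => ->.
have Mn : Mc \is normalmx by apply/normalmxP; rewrite Mch.
have Mh : Mc \is hermsymmx by rewrite is_hermitianmxE expr0 scale1r Mch.
have /orthomx_spectralP eMc := Mn.
have dreal := hermitian_spectral_diag_real Mh.
set P := spectralmx Mc in eMc; set d := spectral_diag Mc in eMc dreal.
have PU : P \is unitarymx by exact: spectral_unitarymx.
have PPt : (P *m P ^t* = 1%:M)%sesqui by apply/unitarymxP.
rewrite invmx_unitary // in eMc.
have hd i : exists r, d 0 i = f r /\ 0 <= r <= lam.
  exists (complex.Re (d 0 i)).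
  have e : d 0 i = f (complex.Re (d 0 i)) by apply: Creal_eq; exact: (mxOverP dreal).
  split => //; apply: hev; rewrite -(eigenvalue_map (real_complex R)).
  suff : eigenvalue Mc (d 0 i) by rewrite {1}e.
  apply/eigenvalueP; exists (row i P).
    by rewrite {1}eMc !mulmxA -row_mul PPt row1 -rowE row_diag_mx -scalemxAl -rowE.
  apply/negP => /eqP h0; have := congr1 (fun X => X *m (P ^t*)%sesqui) h0.
  rewrite mul0mx -row_mul PPt row1 => /(congr1 (fun X : 'rV_n => X 0 i)).
  by rewrite !mxE eqxx /= => /eqP; rewrite eqxx oner_eq0.
have quad (v : 'cV[C]_n) (e : 'rV[C]_n) :
    ((v ^t*)%sesqui *m diag_mx e *m v) 0 0 = \sum_i e 0 i * (v i 0 * (v i 0)^*).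
  rewrite mxE; apply: eq_bigr => i _. rewrite mul_mx_diag !mxE.
  by rewrite mulrAC mulrC (mulrC (_^*)).
pose u := map_mx f y.
have ut : ((u ^t*)%sesqui = u^T).
  by apply/matrixP => i j; rewrite !mxE f_conj.
have mapE (X : 'M[R]_1) : f (X 0 0) = (map_mx f X) 0 0 by rewrite mxE.
have McT : Mc^T = Mc by rewrite /Mc map_trmx sM.
have hh : lam * (y^T *m M *m y) 0 0 = (lam *: (y^T *m M *m y)) 0 0.
  by rewrite [RHS]mxE.
rewrite hh -lecR !mapE !map_mxM -!map_trmx !map_mxM map_mxZ !map_mxM -!map_trmx -/Mc -/u.
rewrite trmx_mul McT -ut [in X in _ <= X]mxE.
pose w := P *m u.
have wt : ((w ^t*)%sesqui = (u ^t*)%sesqui *m (P ^t*)%sesqui).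
  by rewrite /w trmx_mul map_mxM.
have eL : (u ^t*)%sesqui *m Mc *m (Mc *m u) =
   (w ^t*)%sesqui *m diag_mx (\row_j (d 0 j * d 0 j)) *m w.
  rewrite eMc -mulmx_diag wt /w !mulmxA -(mulmxA _ P (P ^t*)%sesqui) PPt mulmx1.
  by rewrite ?mulmxA.
have eR : (u ^t*)%sesqui *m Mc *m u = (w ^t*)%sesqui *m diag_mx d *m w.
  by rewrite eMc wt /w ?mulmxA.
rewrite eL eR !quad mulr_sumr; apply: ler_sum => i _.
have [r [e /andP[r0 rl]]] := hd i.
rewrite mxE e -!mulrA mulrA [X in _ <= X]mulrA.
apply: ler_wpM2r; first exact: mul_conjC_ge0.
have fM (x z : R) : (x * z)%:C%C = x%:C%C * z%:C%C :> C by exact: rmorphM.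
change (r%:C%C * r%:C%C <= lam%:C%C * r%:C%C :> C).
by rewrite -!fM lecR ler_wpM2r.
Qed.
End Spec.

Lemma rgram_ge0 (R : realType) k (z : 'rV[R]_k) : 0 <= (z *m z^T) 0 0.
Proof. by rewrite mxE; apply: sumr_ge0 => j _; rewrite mxE -expr2 sqr_ge0. Qed.

Lemma rgram_gt0 (R : realType) k (z : 'rV[R]_k) : z != 0 -> 0 < (z *m z^T) 0 0.
Proof.
move=> nz; rewrite lt_neqAle; apply/andP; split; last exact: rgram_ge0.
apply: contra nz => /eqP h.
apply/eqP; apply: gram0; apply/matrixP => i j; by rewrite !ord1 -h mxE.
Qed.

Lemma ev_ge0 (R : realType) m n (A : 'M[R]_(m, n)) r :
  eigenvalue (A^T *m A) r -> 0 <= r.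
Proof.
move=> /eigenvalueP [v hv nz].
have e : ((v *m A^T) *m (v *m A^T)^T) 0 0 = r * (v *m v^T) 0 0.
  by rewrite trmx_mul trmxK mulmxA -(mulmxA v) hv -scalemxAl mxE.
by rewrite -(pmulr_lge0 r (rgram_gt0 nz)) -e rgram_ge0.
Qed.

Theorem lemma4p8 (R : realType) (m n : nat) (A : 'M[R]_(m, n)) (c : 'cV[R]_m)
  (hint : exists k : int, sqnorm (A^T *m c) = k%:~R)
  (hnz : A^T *m c != 0) :
  sqnorm (proj_im A *m c) >= 1 / sigma_max A ^+ 2
  /\ 1 / sigma_max A ^+ 2 = 1 / lambda_max (A^T *m A).
Proof.
rewrite /sigma_max /lambda_max; case: xgetP => [l _ /= [hl hmax] | hnone]; last first.
  rewrite sqrtr0 expr0n /= !div1r invr0; split => //.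
  by rewrite /sqnorm; apply: sumr_ge0 => i _; rewrite sqr_ge0.
have hl0 := ev_ge0 hl.
rewrite sqr_sqrtr //; split => //.
set M := A^T *m A.
have sM : M^T = M by rewrite /M trmx_mul trmxK.
have [h1 h2 h3 h4] := pinvP M.
set X := pinv M in h1 h2 h3 h4.
have MXA : M *m X *m A^T = A^T.
  have e0 : (1%:M - M *m X) *m M = 0 by rewrite mulmxBl mul1mx h1 subrr.
  have W0 : (1%:M - M *m X) *m A^T = 0.
    apply: gram0; rewrite trmx_mul trmxK mulmxA -(mulmxA _ A^T A) -/M e0.
    by rewrite mul0mx.
  by move: W0; rewrite mulmxBl mul1mx => /eqP; rewrite subr_eq0 => /eqP.
set b := A^T *m c.
pose y := X *m b.
have My : M *m y = b by rewrite /y mulmxA /b mulmxA MXA.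
have -> : proj_im A *m c = A *m y by rewrite /proj_im /y /b !mulmxA.
have eq1 : sqnorm (A *m y) = (y^T *m M *m y) 0 0.
  by rewrite sqnormE trmx_mul /M !mulmxA.
have eq2 : sqnorm b = ((M *m y)^T *m (M *m y)) 0 0 by rewrite My sqnormE.
have q0 : 0 <= sqnorm (A *m y).
  by rewrite sqnormE; have := rgram_ge0 (A *m y)^T; rewrite trmxK.
have hb : sqnorm b <= l * sqnorm (A *m y).
  rewrite eq1 eq2; apply: spec_bound => // r hr.
  by rewrite (ev_ge0 hr) hmax.
have b1 : 1 <= sqnorm b.
  have [k hk] := hint; rewrite -/b in hk; rewrite hk ler1z.
  have : 0 < sqnorm b.
    rewrite sqnormE; have := @rgram_gt0 _ _ b^T; rewrite trmxK; apply.
    by apply: contra hnz => /eqP h; rewrite -/b -[b]trmxK h trmx0.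
  by rewrite hk ltr0z.

have hlp : 0 < l.
  rewrite lt_neqAle hl0 andbT; apply/eqP => l0.
  by move: (le_trans b1 hb); rewrite -l0 mul0r ler10.
rewrite div1r -[l^-1]mulr1 ler_pdivrMl //.
exact: le_trans b1 hb.
Qed.
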